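(* Let $G_3$ be the group described in the context and let $\sigma$ be the automorphism of $G_3$ (of order 2) determined by $a_i^\sigma=b_i$, $b_i^\sigma=a_i$, $u_{ij}^\sigma=v_{ij}$, $v_{ij}^\sigma=u_{ij}$, $p_{ij}^\sigma=p_{ij}$, $z_{123}^\sigma=t_{123}$, $t_{123}^\sigma=z_{123}$. Let $\tau:G_3\to G_3$ be the map determined by $a_i^\tau=a_i$, $b_i^\tau=a_i^{-1}b_i^{-1}$, $u_{ij}^\tau=u_{ij}$, $v_{ij}^\tau=u_{ij}v_{ij}$, $p_{ij}^\tau=u_{ij}p_{ij}$, $z_{123}^\tau=z_{123}$, $t_{123}^\tau=z_{123}t_{123}$. Then $\tau$ is an automorphism of $G_3$ of order $2$, and $\rho=\sigma\circ\tau$ (apply $\tau$ first, then $\sigma$; so $a_i^\rho=b_i$, $b_i^\rho=a_i^{-1}b_i^{-1}$, $u_{ij}^\rho=v_{ij}$, $v_{ij}^\rho=u_{ij}v_{ij}$, $p_{ij}^\rho=v_{ij}p_{ij}$, $z_{123}^\rho=t_{123}$, $t_{123}^\rho=z_{123}t_{123}$) is an automorphism of $G_3$ of order $3$.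
   Context: For a group, $[x,y]=x^{-1}y^{-1}xy$. $G_3$ is the nilpotent group of class $3$ generated by $a_1,a_2,a_3,b_1,b_2,b_3$ with the following defining relations, where $u_{ij}=[a_i,a_j]$, $v_{ij}=[b_i,b_j]$, $p_{ij}=[a_i,b_j]$, indices in $\{1,2,3\}$: (1) $[a_i,b_i]=1$ and $a_i^2,b_i^2$ are central; (2) for $i<j$: $u_{ij}=u_{ji}$, $v_{ij}=v_{ji}$, $u_{ij}^2=v_{ij}^2=1$; (3) $u_{ij},v_{ij}$ central; (4) $p_{ij}=p_{ji}$, $p_{ij}^2=1$ for $i<j$; (5) for $\{i,j,k\}=\{1,2,3\}$, $z_{ijk}:=[p_{ij},a_k]$ with $z_{ijk}=z_{jik}=z_{kij}$; (6) $t_{ijk}:=[p_{ij},b_k]$ with $t_{ijk}=t_{jik}=t_{kij}$; (7) $z_{ijk}^2=t_{ijk}^2=1$; (8) $z_{ijk},t_{ijk}$ central. Every element of $G_3$ has a unique normal form $a_1^{\alpha_1}a_2^{\alpha_2}a_3^{\alpha_3}b_1^{\alpha_4}b_2^{\alpha_5}b_3^{\alpha_6}u_{12}^{\alpha_7}u_{13}^{\alpha_8}u_{23}^{\alpha_9}v_{12}^{\alpha_{10}}v_{13}^{\alpha_{11}}v_{23}^{\alpha_{12}}p_{12}^{\alpha_{13}}p_{13}^{\alpha_{14}}p_{23}^{\alpha_{15}}z_{123}^{\alpha_{16}}t_{123}^{\alpha_{17}}$ ($\alpha_1,\dots,\alpha_6\in\mathbb{Z}$, others in $\{0,1\}$);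 maps given on these elements are extended to $G_3$ multiplicatively through this normal form. *)

(* Defs.v *)
(* G_3 is an infinite group: we work with an abstract group
   (carrier + operations + axioms) equipped with elements a_i, b_i satisfying the
   defining relations of G_3 and such that every element has a unique normal form.
   Such a group is exactly (isomorphic to) G_3. *)
From Stdlib Require Import ZArith Arith.
Set Implicit Arguments.

Record group := Group {
  carrier :> Type;
  gmul : carrier -> carrier -> carrier;
  gone : carrier;
  ginv : carrier -> carrier;
  gmulA : forall x y z, gmul x (gmul y z) = gmul (gmul x y) z;
  gmul1l : forall x, gmul gone x = x;
  gmulVl : forall x, gmul (ginv x) x = gone }.

Arguments gmul {g} _ _.
Arguments gone {g}.
Arguments ginv {g} _.

Section G3.
Variable G : group.

Fixpoint npow (x : G) (n : nat) : G :=
  match n with 0 => gone | S n => gmul x (npow x n) end.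

Definition zpow (x : G) (e : Z) : G :=
  match e with
  | Z0 => gone
  | Zpos q => npow x (Pos.to_nat q)
  | Zneg q => ginv (npow x (Pos.to_nat q))
  end.

Definition bpow (x : G) (b : bool) : G := if b then x else gone.

Definition comm (x y : G) : G := gmul (gmul (gmul (ginv x) (ginv y)) x) y.

Definition central (x : G) : Prop := forall y, gmul x y = gmul y x.

Variables a b : nat -> G.

Definition uu i j := comm (a i) (a j).
Definition vv i j := comm (b i) (b j).
Definition pp i j := comm (a i) (b j).
Definition zz i j k := comm (pp i j) (a k).
Definition tt i j k := comm (pp i j) (b k).

Definition idx (i : nat) : Prop := 1 <= i <= 3.

Definition G3_relations : Prop :=
  (forall i, idx i ->
     comm (a i) (b i) = gone /\ central (npow (a i) 2) /\ central (npow (b i) 2)) /\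
  (forall i j, idx i -> idx j -> i < j ->
     uu i j = uu j i /\ vv i j = vv j i /\
     npow (uu i j) 2 = gone /\ npow (vv i j) 2 = gone /\
     central (uu i j) /\ central (vv i j) /\
     pp i j = pp j i /\ npow (pp i j) 2 = gone) /\
  (forall i j k, idx i -> idx j -> idx k -> i <> j -> j <> k -> i <> k ->
     zz i j k = zz j i k /\ zz i j k = zz k i j /\
     tt i j k = tt j i k /\ tt i j k = tt k i j /\
     npow (zz i j k) 2 = gone /\ npow (tt i j k) 2 = gone /\
     central (zz i j k) /\ central (tt i j k)).

Definition basis (k : nat) : G :=
  match k with
  | 1 => a 1 | 2 => a 2 | 3 => a 3
  | 4 => b 1 | 5 => b 2 | 6 => b 3
  | 7 => uu 1 2 | 8 => uu 1 3 | 9 => uu 2 3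
  | 10 => vv 1 2 | 11 => vv 1 3 | 12 => vv 2 3
  | 13 => pp 1 2 | 14 => pp 1 3 | 15 => pp 2 3
  | 16 => zz 1 2 3 | 17 => tt 1 2 3
  | _ => gone
  end.

Definition tau_img (k : nat) : G :=
  match k with
  | 4 => gmul (ginv (a 1)) (ginv (b 1))
  | 5 => gmul (ginv (a 2)) (ginv (b 2))
  | 6 => gmul (ginv (a 3)) (ginv (b 3))
  | 10 => gmul (uu 1 2) (vv 1 2)
  | 11 => gmul (uu 1 3) (vv 1 3)
  | 12 => gmul (uu 2 3) (vv 2 3)
  | 13 => gmul (uu 1 2) (pp 1 2)
  | 14 => gmul (uu 1 3) (pp 1 3)
  | 15 => gmul (uu 2 3) (pp 2 3)
  | 17 => gmul (zz 1 2 3) (tt 1 2 3)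
  | k => basis k
  end.

Definition sigma_img (k : nat) : G :=
  match k with
  | 1 => b 1 | 2 => b 2 | 3 => b 3
  | 4 => a 1 | 5 => a 2 | 6 => a 3
  | 7 => vv 1 2 | 8 => vv 1 3 | 9 => vv 2 3
  | 10 => uu 1 2 | 11 => uu 1 3 | 12 => uu 2 3
  | 16 => tt 1 2 3 | 17 => zz 1 2 3
  | k => basis k
  end.

End G3.
Arguments npow {G} _ _.
Arguments zpow {G} _ _.
Arguments bpow {G} _ _.
Arguments comm {G} _ _.
Arguments central {G} _.
Arguments basis {G} _ _ _.
Arguments tau_img {G} _ _ _.
Arguments sigma_img {G} _ _ _.
Arguments G3_relations {G} _ _.

Record NF := mkNF {
  e1 : Z; e2 : Z; e3 : Z; e4 : Z; e5 : Z; e6 : Z;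
  f7 : bool; f8 : bool; f9 : bool; f10 : bool; f11 : bool; f12 : bool;
  f13 : bool; f14 : bool; f15 : bool; f16 : bool; f17 : bool }.

Definition nfeval {G : group} (c : nat -> G) (n : NF) : G :=
  let m := @gmul G in
  m (m (m (m (m (m (m (m (m (m (m (m (m (m (m (m
    (zpow (c 1) (e1 n)) (zpow (c 2) (e2 n))) (zpow (c 3) (e3 n)))
    (zpow (c 4) (e4 n))) (zpow (c 5) (e5 n))) (zpow (c 6) (e6 n)))
    (bpow (c 7) (f7 n))) (bpow (c 8) (f8 n))) (bpow (c 9) (f9 n)))
    (bpow (c 10) (f10 n))) (bpow (c 11) (f11 n))) (bpow (c 12) (f12 n)))
    (bpow (c 13) (f13 n))) (bpow (c 14) (f14 n))) (bpow (c 15) (f15 n)))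
    (bpow (c 16) (f16 n))) (bpow (c 17) (f17 n)).

Definition G3_unique_normal_form {G : group} (a b : nat -> G) : Prop :=
  forall g : G, exists! n : NF, nfeval (basis a b) n = g.

Definition is_hom {G : group} (f : G -> G) : Prop :=
  forall x y, f (gmul x y) = gmul (f x) (f y).

Definition is_automorphism {G : group} (f : G -> G) : Prop :=
  is_hom f /\ exists g : G -> G, (forall x, g (f x) = x) /\ (forall x, f (g x) = x).

Definition has_order {G : group} (f : G -> G) (n : nat) : Prop :=
  0 < n /\ (forall x, Nat.iter n f x = x) /\
  (forall m, 0 < m < n -> exists x, Nat.iter m f x <> x).

(* Main.v *)
Require Import Defs.
From Stdlib Require Import ZArith Arith Lia Btauto Bool List.
Import ListNotations.



Arguments gmulA {g} x y z.
Arguments gmul1l {g} x.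
Arguments gmulVl {g} x.

Section GF.
Variable G : group.
Local Infix "·" := (@gmul G) (at level 40, left associativity).
Local Notation "1" := (@gone G).
Implicit Types x y z c X Y D C : G.

Lemma mulV (x : G) : x · ginv x = 1.
Proof.
  assert (H1 : ginv (ginv x) · (ginv x · (x · ginv x)) = x · ginv x).
  { rewrite gmulA, gmulVl, gmul1l. reflexivity. }
  rewrite <- H1. rewrite (gmulA (ginv x) x), gmulVl, gmul1l, gmulVl. reflexivity.
Qed.

Lemma mul1r (x : G) : x · 1 = x.
Proof. rewrite <- (gmulVl x), gmulA, mulV, gmul1l. reflexivity. Qed.

Lemma mulKl (x y : G) : ginv x · (x · y) = y.
Proof. rewrite gmulA, gmulVl, gmul1l; reflexivity. Qed.
Lemma mulKr (x y : G) : x · (ginv x · y) = y.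
Proof. rewrite gmulA, mulV, gmul1l; reflexivity. Qed.
Lemma mulKr' (x y : G) : x · y · ginv y = x.
Proof. rewrite <- gmulA, mulV, mul1r; reflexivity. Qed.
Lemma mulKl' (x y : G) : x · ginv y · y = x.
Proof. rewrite <- gmulA, gmulVl, mul1r; reflexivity. Qed.

Lemma cancel_l (x y z : G) : x · y = x · z -> y = z.
Proof. intro H. rewrite <- (mulKl x y), H, mulKl. reflexivity. Qed.
Lemma cancel_r (x y z : G) : y · x = z · x -> y = z.
Proof. intro H. rewrite <- (mulKr' y x), H, mulKr'. reflexivity. Qed.

Lemma inv_uniq (x y : G) : x · y = 1 -> ginv x = y.
Proof. intro H. apply (cancel_l x). rewrite mulV, H; reflexivity. Qed.
Lemma inv_mul (x y : G) : ginv (x · y) = ginv y · ginv x.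
Proof. apply inv_uniq. rewrite gmulA, <- (gmulA x y), mulV, mul1r, mulV; reflexivity. Qed.
Lemma inv_inv (x : G) : ginv (ginv x) = x.
Proof. apply inv_uniq. apply gmulVl. Qed.
Lemma inv_one : ginv (@gone G) = 1.
Proof. apply inv_uniq. apply gmul1l. Qed.

Definition commute (x y : G) := x · y = y · x.

Lemma commute_sym x y : commute x y -> commute y x.
Proof. unfold commute; auto. Qed.
Lemma commute_1 x : commute 1 x.
Proof. unfold commute. rewrite gmul1l, mul1r; reflexivity. Qed.
Lemma commute_mul x y z : commute x z -> commute y z -> commute (x · y) z.
Proof. unfold commute; intros H1 H2. rewrite <- gmulA, H2, gmulA, H1, gmulA; reflexivity. Qed.
Lemma commute_inv x y : commute x y -> commute (ginv x) y.
Proof. unfold commute; intro H. apply (cancel_l x). rewrite gmulA, mulV, gmul1l.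
  rewrite gmulA, H, <- gmulA, mulV, mul1r; reflexivity. Qed.
Lemma commute_npow x y n : commute x y -> commute (npow x n) y.
Proof. intro H; induction n; simpl. apply commute_1. apply commute_mul; auto. Qed.
Lemma commute_zpow x y e : commute x y -> commute (zpow x e) y.
Proof. intro H; destruct e; simpl. apply commute_1. apply commute_npow; auto.
  apply commute_inv, commute_npow; auto. Qed.
Lemma commute_bpow x y f : commute x y -> commute (bpow x f) y.
Proof. intro H; destruct f; simpl; auto using commute_1. Qed.
Lemma commute_self x : commute x x.
Proof. reflexivity. Qed.

Lemma npow_succ_r x n : npow x (S n) = npow x n · x.
Proof. induction n. simpl. rewrite gmul1l, mul1r; reflexivity.
  change (npow x (S (S n))) with (x · npow x (S n)). rewrite IHn at 1. rewrite gmulA. reflexivity. Qed.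

Lemma zpow_succ x e : zpow x (Z.succ e) = zpow x e · x.
Proof.
  destruct e as [|p|p]; simpl.
  - rewrite mul1r, gmul1l; reflexivity.
  - rewrite Pos.add_1_r, Pos2Nat.inj_succ, npow_succ_r; reflexivity.
  - destruct (Pos.eq_dec p 1) as [->|Hp].
    + simpl. rewrite mul1r, gmulVl; reflexivity.
    + assert (E : Z.pos_sub 1 p = Zneg (Pos.pred p)).
      { rewrite Z.pos_sub_lt. f_equal. lia. lia. }
      rewrite E. simpl.
      assert (E2 : Pos.to_nat p = S (Pos.to_nat (Pos.pred p))).
      { rewrite <- Pos2Nat.inj_succ, Pos.succ_pred; auto. }
      rewrite E2. simpl. rewrite inv_mul, mulKl'; reflexivity.
Qed.

Lemma zpow_pred x e : zpow x (Z.pred e) = zpow x e · ginv x.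
Proof. rewrite <- (Z.succ_pred e) at 2. rewrite zpow_succ, mulKr'; reflexivity. Qed.

Lemma zpow_add x e f : zpow x (e + f) = zpow x e · zpow x f.
Proof.
  induction f using Z.peano_ind.
  - rewrite Z.add_0_r; simpl; rewrite mul1r; reflexivity.
  - rewrite Z.add_succ_r, !zpow_succ, IHf, gmulA; reflexivity.
  - rewrite Z.add_pred_r, !zpow_pred, IHf, gmulA; reflexivity.
Qed.

Lemma zpow_0 (x:G) : zpow x 0 = 1. Proof. reflexivity. Qed.
Lemma zpow_1 (x:G) : zpow x 1 = x. Proof. simpl. apply mul1r. Qed.
Lemma zpow_m1 (x:G) : zpow x (-1) = ginv x. Proof. simpl. rewrite mul1r; reflexivity. Qed.

Lemma bpow_zpow x f : bpow x f = zpow x (Z.b2z f).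
Proof. destruct f; simpl; [rewrite mul1r|]; reflexivity. Qed.

Lemma bpow_bpow c b1 b2 : bpow (bpow c b1) b2 = bpow c (b1 && b2).
Proof. destruct b1, b2; reflexivity. Qed.

Lemma bpow_xor c b1 b2 : c · c = 1 -> bpow c b1 · bpow c b2 = bpow c (xorb b1 b2).
Proof. intro H; destruct b1, b2; simpl; rewrite ?gmul1l, ?mul1r; auto. Qed.

Lemma bpow_neg c b : c · c = 1 -> bpow c b · c = bpow c (negb b).
Proof. intro H; destruct b; simpl; rewrite ?gmul1l; auto. Qed.

Lemma swap_l x y c : x · y = y · x · c -> commute c x -> commute c y -> c · c = 1 ->
  forall e, zpow x e · y = y · zpow x e · bpow c (Z.odd e).
Proof.
  intros Hc Hx Hy H2 e.
  induction e using Z.peano_ind.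
  - simpl. rewrite gmul1l, !mul1r; reflexivity.
  - set (B := bpow c (Z.odd e)).
    assert (HB : commute B x) by (apply commute_bpow; auto).
    rewrite zpow_succ, <- gmulA, Hc, !gmulA, IHe, Z.odd_succ, <- Z.negb_odd.
    rewrite <- bpow_neg by auto. fold B.
    rewrite <- (gmulA _ B x), HB, !gmulA. reflexivity.
  - assert (Hc' : ginv x · y = y · ginv x · c).
    { apply (cancel_l x). rewrite mulKr. rewrite !gmulA. rewrite Hc.
      rewrite <- (gmulA (y · x) c (ginv x)).
      rewrite (commute_sym _ _ (commute_inv _ _ (commute_sym _ _ Hx))). unfold commute in *.
      rewrite gmulA, mulKr'. rewrite <- gmulA, H2, mul1r. reflexivity. }
    set (B := bpow c (Z.odd e)).
    assert (HB : commute B (ginv x)) by (apply commute_bpow, commute_sym, commute_inv, commute_sym; auto).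
    rewrite zpow_pred, <- gmulA, Hc', !gmulA, IHe, Z.odd_pred, <- Z.negb_odd.
    rewrite <- bpow_neg by auto. fold B.
    rewrite <- (gmulA _ B (ginv x)), HB, !gmulA. reflexivity.
Qed.

Lemma flip_rel X Y D : Y · X = X · Y · D -> commute D X -> commute D Y -> D · D = 1 ->
  X · Y = Y · X · D.
Proof.
  intros H H1 H2 H3. rewrite H. rewrite <- gmulA, H3, mul1r; reflexivity.
Qed.

Lemma swap x y c : x · y = y · x · c -> commute c x -> commute c y -> c · c = 1 ->
  forall e f, zpow x e · zpow y f = zpow y f · zpow x e · bpow c (Z.odd e && Z.odd f).
Proof.
  intros Hc Hx Hy H2 e f.
  set (X := zpow x e). set (C := bpow c (Z.odd e)).
  assert (HX : X · y = y · X · C) by (apply swap_l; auto).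
  assert (CX : commute C X) by (apply commute_bpow; apply commute_sym, commute_zpow, commute_sym; auto).
  assert (Cy : commute C y) by (apply commute_bpow; auto).
  assert (C2 : C · C = 1) by (unfold C; destruct (Z.odd e); simpl; auto using gmul1l).
  assert (HY : y · X = X · y · C) by (apply flip_rel; auto).
  pose proof (swap_l y X C HY Cy CX C2 f) as HH.
  rewrite <- bpow_bpow. fold C.
  apply flip_rel; auto.
  - apply commute_bpow; auto.
  - apply commute_bpow. apply commute_sym, commute_zpow, commute_sym; auto.
  - destruct (Z.odd f); simpl; auto using gmul1l.
Qed.

Lemma comm_rel x y : x · y = y · x · comm x y.
Proof. unfold comm. rewrite !gmulA, mulKr', mulV, gmul1l. reflexivity. Qed.

Lemma comm_trivial x y : comm x y = 1 -> commute x y.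
Proof. intro H. unfold commute. rewrite comm_rel, H, mul1r. reflexivity. Qed.

Lemma commute_zz x y e f : commute x y -> commute (zpow x e) (zpow y f).
Proof. intro H. apply commute_zpow. apply commute_sym, commute_zpow, commute_sym; auto. Qed.

End GF.

Arguments mulV {G}.
Arguments mul1r {G}.
Arguments mulKl {G}.
Arguments mulKr {G}.
Arguments mulKr' {G}.
Arguments mulKl' {G}.
Arguments cancel_l {G}.
Arguments cancel_r {G}.
Arguments inv_uniq {G}.
Arguments inv_mul {G}.
Arguments inv_inv {G}.
Arguments inv_one {G}.
Arguments commute {G}.
Arguments commute_sym {G}.
Arguments commute_1 {G}.
Arguments commute_mul {G}.
Arguments commute_inv {G}.
Arguments commute_npow {G}.
Arguments commute_zpow {G}.
Arguments commute_bpow {G}.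
Arguments commute_self {G}.
Arguments npow_succ_r {G}.
Arguments zpow_succ {G}.
Arguments zpow_pred {G}.
Arguments zpow_add {G}.
Arguments zpow_0 {G}.
Arguments zpow_1 {G}.
Arguments zpow_m1 {G}.
Arguments bpow_zpow {G}.
Arguments bpow_bpow {G}.
Arguments bpow_xor {G}.
Arguments bpow_neg {G}.
Arguments swap_l {G}.
Arguments flip_rel {G}.
Arguments swap {G}.
Arguments comm_rel {G}.
Arguments comm_trivial {G}.
Arguments commute_zz {G}.


Section GF2.
Variable G : group.
Local Infix "·" := (@gmul G) (at level 40, left associativity).
Local Notation "1" := (@gone G).
Implicit Types x y z c p q X Y D C : G.

Lemma npow2 x : npow x 2 = x · x.
Proof. simpl. rewrite mul1r. reflexivity. Qed.

Lemma central_commute c y : central c -> commute c y.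
Proof. intros H; apply H. Qed.

Lemma D2a x y p : x · y = y · x · p -> p · p = 1 -> central (npow x 2) -> commute p x.
Proof.
  intros H H2 Hc. rewrite npow2 in Hc.
  assert (E : y · (x · x) = y · (x · p · x · p)).
  { rewrite <- Hc. rewrite <- gmulA, H, !gmulA, H. rewrite <- !gmulA. reflexivity. }
  apply cancel_l in E. rewrite <- !gmulA in E. apply cancel_l in E.
  unfold commute. rewrite E at 2. rewrite !gmulA. rewrite <- (gmulA (p · x) p p), H2, mul1r. reflexivity.
Qed.

Lemma D2b x y p : x · y = y · x · p -> p · p = 1 -> central (npow y 2) -> commute p y.
Proof.
  intros H H2 Hc. rewrite npow2 in Hc.
  assert (H' : y · x = x · y · p).
  { rewrite H. rewrite <- !gmulA, H2, mul1r. reflexivity. }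
  assert (E : x · (y · y) = x · (y · p · y · p)).
  { rewrite <- Hc, <- gmulA, H', !gmulA, H'. reflexivity. }
  apply cancel_l in E. rewrite <- !gmulA in E. apply cancel_l in E.
  unfold commute. rewrite E at 2. rewrite !gmulA. rewrite <- (gmulA (p · y) p p), H2, mul1r. reflexivity.
Qed.


Lemma ctx2 w x y r : x · y = r -> w · x · y = w · r.
Proof. intro H. rewrite <- gmulA, H. reflexivity. Qed.

Lemma cshift c w v : central c -> w · c · v = w · v · c.
Proof. intro H. rewrite <- gmulA, (H v), gmulA. reflexivity. Qed.

Lemma central_inv c : central c -> central (ginv c).
Proof. intros H y. apply commute_inv. apply H. Qed.

Lemma central_mul c d : central c -> central d -> central (c · d).
Proof. intros H1 H2 y. apply commute_mul; [apply H1 | apply H2]. Qed.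

Lemma move_q q x c : q · x = x · q · c -> central c -> q · ginv x = ginv x · q · ginv c.
Proof.
  intros H Hc.
  assert (E : ginv x · q · ginv c · x = q).
  { rewrite (cshift _ _ _ (central_inv _ Hc)). rewrite <- (gmulA (ginv x) q x), H.
    rewrite !gmulA, mulKr', gmulVl, gmul1l. reflexivity. }
  rewrite <- E at 1. rewrite mulKr'. reflexivity.
Qed.

Lemma commute_comm q x y : central (comm q x) -> central (comm q y) -> commute q (comm x y).
Proof.
  intros Hx Hy. set (cx := comm q x) in *. set (cy := comm q y) in *.
  assert (Ex : q · x = x · q · cx) by apply comm_rel.
  assert (Ey : q · y = y · q · cy) by apply comm_rel.
  pose proof (move_q _ _ _ Ex Hx) as Exi. pose proof (move_q _ _ _ Ey Hy) as Eyi.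
  pose proof (central_inv _ Hx) as Hxi. pose proof (central_inv _ Hy) as Hyi.
  unfold commute, comm. rewrite <- (gmul1l q) at 1. rewrite !gmulA.
  rewrite (ctx2 _ _ _ _ Exi), !gmulA. repeat rewrite (cshift _ _ _ Hxi).
  rewrite (ctx2 _ _ _ _ Eyi), !gmulA. repeat rewrite (cshift _ _ _ Hyi).
  rewrite (ctx2 _ _ _ _ Ex), !gmulA. repeat rewrite (cshift _ _ _ Hx).
  rewrite (ctx2 _ _ _ _ Ey), !gmulA. rewrite gmul1l.
  rewrite <- !gmulA. f_equal. f_equal. f_equal. f_equal.
  rewrite <- (mul1r q) at 2. f_equal.
  rewrite (Hxi (ginv cy · cx)), <- (gmulA (ginv cy) cx), mulV, mul1r, mulV. reflexivity.
Qed.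


Lemma comm_swap x y : comm y x = ginv (comm x y).
Proof. symmetry. apply inv_uniq. unfold comm. rewrite !gmulA, !mulKr', mulKl', gmulVl. reflexivity. Qed.

Lemma central_bpow c f : central c -> central (bpow c f).
Proof. intros H y. apply commute_bpow. apply H. Qed.

Fixpoint E (ls : list G) (fs : list bool) : G :=
  match ls, fs with
  | l :: ls', f :: fs' => bpow l f · E ls' fs'
  | _, _ => 1
  end.

Fixpoint xorl (fs gs : list bool) : list bool :=
  match fs, gs with
  | f :: fs', g :: gs' => xorb f g :: xorl fs' gs'
  | _, _ => nil
  end.

Definition good (ls : list G) :=
  (forall x y, In x ls -> In y ls -> commute x y) /\ (forall x, In x ls -> x · x = 1).

Lemma E_comm ls fs y : (forall l, In l ls -> commute l y) -> commute (E ls fs) y.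
Proof.
  revert fs; induction ls as [|l ls IH]; intros fs H; destruct fs as [|f fs]; simpl; try apply commute_1.
  apply commute_mul. apply commute_bpow. apply H; simpl; auto.
  apply IH. intros; apply H; simpl; auto.
Qed.

Lemma E_xor ls fs gs : good ls -> length fs = length ls -> length gs = length ls ->
  E ls fs · E ls gs = E ls (xorl fs gs).
Proof.
  revert fs gs; induction ls as [|l ls IH]; intros fs gs Hg Hf Hgs;
    destruct fs as [|f fs]; destruct gs as [|g gs]; simpl in *; try discriminate.
  - apply gmul1l.
  - destruct Hg as [Hc Ho].
    assert (Hg' : good ls) by (split; intros; [apply Hc | apply Ho]; simpl; auto).
    rewrite <- IH by (auto; lia).
    assert (C : commute (E ls fs) (bpow l g)).
    { apply E_comm. intros l' Hl'. apply commute_sym, commute_bpow. apply Hc; simpl; auto. }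
    rewrite <- bpow_xor by (apply Ho; simpl; auto).
    rewrite <- !gmulA. f_equal. rewrite !gmulA. f_equal. apply C.
Qed.

Fixpoint passes (ls cs : list G) (y : G) : Prop :=
  match ls, cs with
  | l :: ls', c :: cs' => l · y = y · l · c /\ central c /\ passes ls' cs' y
  | nil, nil => True
  | _, _ => False
  end.

Lemma E_pass ls cs fs y : passes ls cs y -> E ls fs · y = y · E ls fs · E cs fs.
Proof.
  revert cs fs; induction ls as [|l ls IH]; intros cs fs H; destruct cs as [|c cs]; simpl in H;
    try contradiction; destruct fs as [|f fs]; simpl.
  - rewrite gmul1l, !mul1r; reflexivity.
  - rewrite gmul1l, !mul1r; reflexivity.
  - rewrite gmul1l, !mul1r; reflexivity.
  - destruct H as [H1 [H2 H3]].
    assert (B : bpow l f · y = y · bpow l f · bpow c f).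
    { destruct f; simpl; auto. rewrite gmul1l, !mul1r; reflexivity. }
    rewrite <- gmulA, (IH _ _ H3), !gmulA, B.
    rewrite <- (gmulA (y · bpow l f) (bpow c f) (E ls fs)), (central_bpow _ f H2), !gmulA. reflexivity.
Qed.

End GF2.

Arguments npow2 {G}.
Arguments central_commute {G}.
Arguments D2a {G}.
Arguments D2b {G}.
Arguments ctx2 {G}.
Arguments cshift {G}.
Arguments central_inv {G}.
Arguments central_mul {G}.
Arguments move_q {G}.
Arguments commute_comm {G}.
Arguments comm_swap {G}.
Arguments central_bpow {G}.
Arguments E {G}.
Arguments good {G}.
Arguments E_comm {G}.
Arguments E_xor {G}.
Arguments passes {G}.
Arguments E_pass {G}.


Lemma comm_of_commute (G : group) (x y : G) : commute x y -> comm x y = gone.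
Proof. intro H. unfold comm. unfold commute in H. rewrite <- gmulA, H. rewrite !gmulA, mulKl', gmulVl. reflexivity. Qed.

Lemma inv_order2 (G : group) (x : G) : gmul x x = gone -> ginv x = x.
Proof. intro H. apply inv_uniq. exact H. Qed.

Lemma idx1 : idx 1. Proof. unfold idx; lia. Qed.
Lemma idx2 : idx 2. Proof. unfold idx; lia. Qed.
Lemma idx3 : idx 3. Proof. unfold idx; lia. Qed.

Section Rel.
Variable H : group.
Variables a b : nat -> H.
Hypothesis Hrel : G3_relations a b.
Local Infix "·" := (@gmul H) (at level 40, left associativity).
Local Notation U12 := (uu H a 1 2).
Local Notation U13 := (uu H a 1 3).
Local Notation U23 := (uu H a 2 3).
Local Notation V12 := (vv H b 1 2).
Local Notation V13 := (vv H b 1 3).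
Local Notation V23 := (vv H b 2 3).
Local Notation P12 := (pp H a b 1 2).
Local Notation P13 := (pp H a b 1 3).
Local Notation P23 := (pp H a b 2 3).
Local Notation Z := (zz H a b 1 2 3).
Local Notation T := (tt H a b 1 2 3).

Lemma R1 i : idx i -> comm (a i) (b i) = gone /\ central (npow (a i) 2) /\ central (npow (b i) 2).
Proof. apply Hrel. Qed.
Lemma R2 i j : idx i -> idx j -> i < j ->
     uu H a i j = uu H a j i /\ vv H b i j = vv H b j i /\
     npow (uu H a i j) 2 = gone /\ npow (vv H b i j) 2 = gone /\
     central (uu H a i j) /\ central (vv H b i j) /\
     pp H a b i j = pp H a b j i /\ npow (pp H a b i j) 2 = gone.
Proof. apply Hrel. Qed.
Lemma R3 i j k : idx i -> idx j -> idx k -> i <> j -> j <> k -> i <> k ->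
     zz H a b i j k = zz H a b j i k /\ zz H a b i j k = zz H a b k i j /\
     tt H a b i j k = tt H a b j i k /\ tt H a b i j k = tt H a b k i j /\
     npow (zz H a b i j k) 2 = gone /\ npow (tt H a b i j k) 2 = gone /\
     central (zz H a b i j k) /\ central (tt H a b i j k).
Proof. apply Hrel. Qed.

Ltac r2 i j := destruct (R2 i j) as (?&?&?&?&?&?&?&?);
  [first [exact idx1|exact idx2|exact idx3] | first [exact idx1|exact idx2|exact idx3] | lia |].
Ltac r3 i j k := destruct (R3 i j k) as (?&?&?&?&?&?&?&?);
  [first [exact idx1|exact idx2|exact idx3] | first [exact idx1|exact idx2|exact idx3]
  | first [exact idx1|exact idx2|exact idx3] | lia | lia | lia |].

Lemma cU12 : central U12. Proof. r2 1 2. assumption. Qed.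
Lemma cU13 : central U13. Proof. r2 1 3. assumption. Qed.
Lemma cU23 : central U23. Proof. r2 2 3. assumption. Qed.
Lemma cV12 : central V12. Proof. r2 1 2. assumption. Qed.
Lemma cV13 : central V13. Proof. r2 1 3. assumption. Qed.
Lemma cV23 : central V23. Proof. r2 2 3. assumption. Qed.
Lemma cZ : central Z. Proof. r3 1 2 3. assumption. Qed.
Lemma cT : central T. Proof. r3 1 2 3. assumption. Qed.

Lemma oU12 : U12 · U12 = gone. Proof. r2 1 2. rewrite <- npow2; assumption. Qed.
Lemma oU13 : U13 · U13 = gone. Proof. r2 1 3. rewrite <- npow2; assumption. Qed.
Lemma oU23 : U23 · U23 = gone. Proof. r2 2 3. rewrite <- npow2; assumption. Qed.
Lemma oV12 : V12 · V12 = gone. Proof. r2 1 2. rewrite <- npow2; assumption. Qed.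
Lemma oV13 : V13 · V13 = gone. Proof. r2 1 3. rewrite <- npow2; assumption. Qed.
Lemma oV23 : V23 · V23 = gone. Proof. r2 2 3. rewrite <- npow2; assumption. Qed.
Lemma oP12 : P12 · P12 = gone. Proof. r2 1 2. rewrite <- npow2; assumption. Qed.
Lemma oP13 : P13 · P13 = gone. Proof. r2 1 3. rewrite <- npow2; assumption. Qed.
Lemma oP23 : P23 · P23 = gone. Proof. r2 2 3. rewrite <- npow2; assumption. Qed.
Lemma oZ : Z · Z = gone. Proof. r3 1 2 3. rewrite <- npow2; assumption. Qed.
Lemma oT : T · T = gone. Proof. r3 1 2 3. rewrite <- npow2; assumption. Qed.

Lemma sU21 : uu H a 2 1 = U12. Proof. r2 1 2. auto. Qed.
Lemma sU31 : uu H a 3 1 = U13. Proof. r2 1 3. auto. Qed.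
Lemma sU32 : uu H a 3 2 = U23. Proof. r2 2 3. auto. Qed.
Lemma sV21 : vv H b 2 1 = V12. Proof. r2 1 2. auto. Qed.
Lemma sV31 : vv H b 3 1 = V13. Proof. r2 1 3. auto. Qed.
Lemma sV32 : vv H b 3 2 = V23. Proof. r2 2 3. auto. Qed.
Lemma sP21 : pp H a b 2 1 = P12. Proof. r2 1 2. auto. Qed.
Lemma sP31 : pp H a b 3 1 = P13. Proof. r2 1 3. auto. Qed.
Lemma sP32 : pp H a b 3 2 = P23. Proof. r2 2 3. auto. Qed.

Lemma zP13a2 : comm P13 (a 2) = Z.
Proof. change (zz H a b 1 3 2 = Z). r3 1 3 2. r3 1 2 3. congruence. Qed.
Lemma zP23a1 : comm P23 (a 1) = Z.
Proof. change (zz H a b 2 3 1 = Z). r3 2 3 1. congruence. Qed.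
Lemma zP12a3 : comm P12 (a 3) = Z.
Proof. reflexivity. Qed.
Lemma tP13b2 : comm P13 (b 2) = T.
Proof. change (tt H a b 1 3 2 = T). r3 1 3 2. r3 1 2 3. congruence. Qed.
Lemma tP23b1 : comm P23 (b 1) = T.
Proof. change (tt H a b 2 3 1 = T). r3 2 3 1. congruence. Qed.
Lemma tP12b3 : comm P12 (b 3) = T.
Proof. reflexivity. Qed.

Lemma ab_rel i j : a i · b j = b j · a i · pp H a b i j.
Proof. apply comm_rel. Qed.

Lemma cpa i j : idx i -> pp H a b i j · pp H a b i j = gone -> commute (pp H a b i j) (a i).
Proof. intros Hi Ho. destruct (R1 i Hi) as (_&Ha&_). eapply D2a; eauto. apply ab_rel. Qed.
Lemma cpb i j : idx j -> pp H a b i j · pp H a b i j = gone -> commute (pp H a b i j) (b j).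
Proof. intros Hj Ho. destruct (R1 j Hj) as (_&_&Hb). eapply D2b; eauto. apply ab_rel. Qed.

Lemma cP12a1 : commute P12 (a 1). Proof. apply cpa. exact idx1. exact oP12. Qed.
Lemma cP12b2 : commute P12 (b 2). Proof. apply cpb. exact idx2. exact oP12. Qed.
Lemma cP12a2 : commute P12 (a 2). Proof. rewrite <- sP21. apply cpa. exact idx2. rewrite sP21; exact oP12. Qed.
Lemma cP12b1 : commute P12 (b 1). Proof. rewrite <- sP21. apply cpb. exact idx1. rewrite sP21; exact oP12. Qed.
Lemma cP13a1 : commute P13 (a 1). Proof. apply cpa. exact idx1. exact oP13. Qed.
Lemma cP13b3 : commute P13 (b 3). Proof. apply cpb. exact idx3. exact oP13. Qed.
Lemma cP13a3 : commute P13 (a 3). Proof. rewrite <- sP31. apply cpa. exact idx3. rewrite sP31; exact oP13. Qed.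
Lemma cP13b1 : commute P13 (b 1). Proof. rewrite <- sP31. apply cpb. exact idx1. rewrite sP31; exact oP13. Qed.
Lemma cP23a2 : commute P23 (a 2). Proof. apply cpa. exact idx2. exact oP23. Qed.
Lemma cP23b3 : commute P23 (b 3). Proof. apply cpb. exact idx3. exact oP23. Qed.
Lemma cP23a3 : commute P23 (a 3). Proof. rewrite <- sP32. apply cpa. exact idx3. rewrite sP32; exact oP23. Qed.
Lemma cP23b2 : commute P23 (b 2). Proof. rewrite <- sP32. apply cpb. exact idx2. rewrite sP32; exact oP23. Qed.

Lemma central_one : central (@gone H).
Proof. intro y. apply commute_1. Qed.

Lemma cP12P13 : commute P12 P13.
Proof. apply commute_comm. rewrite comm_of_commute by exact cP12a1. apply central_one.
  rewrite tP12b3. exact cT. Qed.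
Lemma cP12P23 : commute P12 P23.
Proof. apply commute_comm. rewrite comm_of_commute by exact cP12a2. apply central_one.
  rewrite tP12b3. exact cT. Qed.
Lemma cP13P23 : commute P13 P23.
Proof. apply commute_comm. rewrite zP13a2. exact cZ.
  rewrite comm_of_commute by exact cP13b3. apply central_one. Qed.


Definition Ls : list H := [U12; U13; U23; V12; V13; V23; P12; P13; P23; Z; T].
Definition tf (n : NF) : list bool :=
  [f7 n; f8 n; f9 n; f10 n; f11 n; f12 n; f13 n; f14 n; f15 n; f16 n; f17 n].
Definition alpha (n : NF) := zpow (a 1) (e1 n) · zpow (a 2) (e2 n) · zpow (a 3) (e3 n).
Definition beta (n : NF) := zpow (b 1) (e4 n) · zpow (b 2) (e5 n) · zpow (b 3) (e6 n).
Definition ev (n : NF) := alpha n · beta n · E Ls (tf n).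

Lemma nf_ev n : nfeval (basis a b) n = ev n.
Proof. destruct n; unfold nfeval, ev, alpha, beta, tf, Ls; simpl. rewrite mul1r, !gmulA. reflexivity. Qed.

Ltac cen := first [ exact (cU12 _) | exact (cU13 _) | exact (cU23 _) | exact (cV12 _) | exact (cV13 _)
  | exact (cV23 _) | exact (cZ _) | exact (cT _)
  | apply commute_sym; first [ exact (cU12 _) | exact (cU13 _) | exact (cU23 _) | exact (cV12 _) | exact (cV13 _)
  | exact (cV23 _) | exact (cZ _) | exact (cT _)] ].

Lemma good_Ls : good Ls.
Proof.
  split.
  - intros x y Hx Hy. unfold Ls in Hx, Hy. simpl in Hx, Hy.
    repeat destruct Hx as [<-|Hx]; try contradiction;
    repeat destruct Hy as [<-|Hy]; try contradiction;
    first [ cen | apply commute_self | exact cP12P13 | exact cP12P23 | exact cP13P23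
          | apply commute_sym; first [exact cP12P13 | exact cP12P23 | exact cP13P23] ].
  - intros x Hx. unfold Ls in Hx. simpl in Hx.
    repeat destruct Hx as [<-|Hx]; try contradiction;
    first [exact oU12|exact oU13|exact oU23|exact oV12|exact oV13|exact oV23|exact oP12|exact oP13
      |exact oP23|exact oZ|exact oT].
Qed.


Lemma swG (x y c : H) e f : comm x y = c -> commute c x -> commute c y -> c · c = gone ->
  zpow x e · zpow y f = zpow y f · zpow x e · bpow c (Z.odd e && Z.odd f).
Proof. intros Hc H1 H2 H3. subst c. apply swap; auto. apply comm_rel. Qed.

Lemma swC (x y c : H) e f : comm x y = c -> central c -> c · c = gone ->
  zpow x e · zpow y f = zpow y f · zpow x e · bpow c (Z.odd e && Z.odd f).
Proof. intros Hc H1 H3. apply swG; auto; apply H1. Qed.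

Lemma ba_swap j k Pc f e : comm (a k) (b j) = Pc -> Pc · Pc = gone -> commute Pc (a k) -> commute Pc (b j) ->
  zpow (b j) f · zpow (a k) e = zpow (a k) e · zpow (b j) f · bpow Pc (Z.odd f && Z.odd e).
Proof. intros Hc H2 Hk Hj. apply swG; auto. rewrite comm_swap, Hc. apply inv_order2; auto. Qed.

Lemma odd_b2z x : Z.odd (Z.b2z x) = x.
Proof. destruct x; reflexivity. Qed.

Lemma bswap (p y c : H) x e : comm p y = c -> central c -> c · c = gone ->
  bpow p x · zpow y e = zpow y e · bpow p x · bpow c (x && Z.odd e).
Proof. intros. rewrite (bpow_zpow p x). rewrite (swC p y c (Z.b2z x) e) by auto. rewrite odd_b2z. reflexivity. Qed.

Lemma bpow_one x : bpow (@gone H) x = gone.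
Proof. destruct x; reflexivity. Qed.

Lemma pass_comm (l y : H) : commute l y -> l · y = y · l · gone.
Proof. intro Hc. rewrite mul1r. exact Hc. Qed.

Lemma pass_sw (l y c : H) e : comm l y = c -> central c -> c · c = gone -> l · zpow y e = zpow y e · l · bpow c (Z.odd e).
Proof. intros. pose proof (swC l y c 1 e) as E. rewrite zpow_1 in E. apply E; auto. Qed.

Lemma cz (l x : H) e : commute l x -> commute l (zpow x e).
Proof. intro Hc. apply commute_sym, commute_zpow, commute_sym, Hc. Qed.

Lemma ccz (c x : H) e : central c -> commute c (zpow x e).
Proof. intro Hc. apply cz. apply Hc. Qed.

Ltac passtac := simpl; repeat split;
  first [ apply pass_comm; first [ apply ccz; first [exact cU12|exact cU13|exact cU23|exact cV12|exact cV13|exact cV23|exact cZ|exact cT]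
                                | apply cz; first [exact cP12a1|exact cP12a2|exact cP13a1|exact cP13a3|exact cP23a2|exact cP23a3
                                                  |exact cP12b1|exact cP12b2|exact cP13b1|exact cP13b3|exact cP23b2|exact cP23b3] ]
        | apply pass_sw; first [exact zP12a3|exact zP13a2|exact zP23a1|exact tP12b3|exact tP13b2|exact tP23b1|exact cZ|exact cT|exact oZ|exact oT]
        | apply central_one | apply central_bpow; first [exact cZ|exact cT] ].

Ltac Esimp := simpl E; rewrite ?bpow_one, ?gmul1l, ?mul1r, ?bpow_bpow.

Lemma W_a1 n e : E Ls (tf n) · zpow (a 1) e = zpow (a 1) e · E Ls (tf n) · bpow Z (Z.odd e && f15 n).
Proof.
  rewrite (E_pass Ls [gone;gone;gone;gone;gone;gone;gone;gone;bpow Z (Z.odd e);gone;gone]).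
  - unfold tf. Esimp. reflexivity.
  - unfold Ls. passtac.
Qed.


Lemma W_a2 n e : E Ls (tf n) · zpow (a 2) e = zpow (a 2) e · E Ls (tf n) · bpow Z (Z.odd e && f14 n).
Proof.
  rewrite (E_pass Ls [gone;gone;gone;gone;gone;gone;gone;bpow Z (Z.odd e);gone;gone;gone]).
  - unfold tf. Esimp. reflexivity.
  - unfold Ls. passtac.
Qed.
Lemma W_a3 n e : E Ls (tf n) · zpow (a 3) e = zpow (a 3) e · E Ls (tf n) · bpow Z (Z.odd e && f13 n).
Proof.
  rewrite (E_pass Ls [gone;gone;gone;gone;gone;gone;bpow Z (Z.odd e);gone;gone;gone;gone]).
  - unfold tf. Esimp. reflexivity.
  - unfold Ls. passtac.
Qed.
Lemma W_b1 n e : E Ls (tf n) · zpow (b 1) e = zpow (b 1) e · E Ls (tf n) · bpow T (Z.odd e && f15 n).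
Proof.
  rewrite (E_pass Ls [gone;gone;gone;gone;gone;gone;gone;gone;bpow T (Z.odd e);gone;gone]).
  - unfold tf. Esimp. reflexivity.
  - unfold Ls. passtac.
Qed.
Lemma W_b2 n e : E Ls (tf n) · zpow (b 2) e = zpow (b 2) e · E Ls (tf n) · bpow T (Z.odd e && f14 n).
Proof.
  rewrite (E_pass Ls [gone;gone;gone;gone;gone;gone;gone;bpow T (Z.odd e);gone;gone;gone]).
  - unfold tf. Esimp. reflexivity.
  - unfold Ls. passtac.
Qed.
Lemma W_b3 n e : E Ls (tf n) · zpow (b 3) e = zpow (b 3) e · E Ls (tf n) · bpow T (Z.odd e && f13 n).
Proof.
  rewrite (E_pass Ls [gone;gone;gone;gone;gone;gone;bpow T (Z.odd e);gone;gone;gone;gone]).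
  - unfold tf. Esimp. reflexivity.
  - unfold Ls. passtac.
Qed.


Lemma cb (c : H) x : central c -> central (bpow c x).
Proof. intro; apply central_bpow; auto. Qed.

Lemma A_a1 n e : alpha n · zpow (a 1) e =
  zpow (a 1) (e1 n + e) · zpow (a 2) (e2 n) · zpow (a 3) (e3 n)
  · bpow U12 (Z.odd (e2 n) && Z.odd e) · bpow U13 (Z.odd (e3 n) && Z.odd e).
Proof.
  unfold alpha.
  rewrite (ctx2 _ _ _ _ (swC (a 3) (a 1) U13 (e3 n) e sU31 cU13 oU13)), !gmulA.
  rewrite (ctx2 _ _ _ _ (swC (a 2) (a 1) U12 (e2 n) e sU21 cU12 oU12)), !gmulA.
  rewrite (cshift _ _ _ (cb _ _ cU12)).
  rewrite <- zpow_add. reflexivity.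
Qed.

Lemma A_a2 n e : alpha n · zpow (a 2) e =
  zpow (a 1) (e1 n) · zpow (a 2) (e2 n + e) · zpow (a 3) (e3 n)
  · bpow U23 (Z.odd (e3 n) && Z.odd e).
Proof.
  unfold alpha.
  rewrite (ctx2 _ _ _ _ (swC (a 3) (a 2) U23 (e3 n) e sU32 cU23 oU23)), !gmulA.
  rewrite <- (gmulA _ (zpow (a 2) (e2 n))), <- zpow_add, ?gmulA. reflexivity.
Qed.

Lemma A_a3 n e : alpha n · zpow (a 3) e =
  zpow (a 1) (e1 n) · zpow (a 2) (e2 n) · zpow (a 3) (e3 n + e).
Proof.
  unfold alpha. rewrite <- (gmulA _ (zpow (a 3) (e3 n))), <- zpow_add. reflexivity.
Qed.

Lemma B_b1 n e : beta n · zpow (b 1) e =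
  zpow (b 1) (e4 n + e) · zpow (b 2) (e5 n) · zpow (b 3) (e6 n)
  · bpow V12 (Z.odd (e5 n) && Z.odd e) · bpow V13 (Z.odd (e6 n) && Z.odd e).
Proof.
  unfold beta.
  rewrite (ctx2 _ _ _ _ (swC (b 3) (b 1) V13 (e6 n) e sV31 cV13 oV13)), !gmulA.
  rewrite (ctx2 _ _ _ _ (swC (b 2) (b 1) V12 (e5 n) e sV21 cV12 oV12)), !gmulA.
  rewrite (cshift _ _ _ (cb _ _ cV12)).
  rewrite <- zpow_add. reflexivity.
Qed.

Lemma B_b2 n e : beta n · zpow (b 2) e =
  zpow (b 1) (e4 n) · zpow (b 2) (e5 n + e) · zpow (b 3) (e6 n)
  · bpow V23 (Z.odd (e6 n) && Z.odd e).
Proof.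
  unfold beta.
  rewrite (ctx2 _ _ _ _ (swC (b 3) (b 2) V23 (e6 n) e sV32 cV23 oV23)), !gmulA.
  rewrite <- (gmulA _ (zpow (b 2) (e5 n))), <- zpow_add, ?gmulA. reflexivity.
Qed.

Lemma B_b3 n e : beta n · zpow (b 3) e =
  zpow (b 1) (e4 n) · zpow (b 2) (e5 n) · zpow (b 3) (e6 n + e).
Proof.
  unfold beta. rewrite <- (gmulA _ (zpow (b 3) (e6 n))), <- zpow_add. reflexivity.
Qed.

Lemma cab i : idx i -> commute (b i) (a i).
Proof. intro Hi. destruct (R1 i Hi) as (Hc&_&_). apply commute_sym, comm_trivial, Hc. Qed.

Lemma bcomm (p y : H) x e : commute p y -> bpow p x · zpow y e = zpow y e · bpow p x.
Proof. intro Hc. apply commute_bpow. apply cz. exact Hc. Qed.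

Lemma BA1 n e : beta n · zpow (a 1) e = zpow (a 1) e · beta n
  · bpow P12 (Z.odd (e5 n) && Z.odd e) · bpow P13 (Z.odd (e6 n) && Z.odd e)
  · bpow T ((Z.odd (e5 n) && Z.odd e) && Z.odd (e6 n)).
Proof.
  unfold beta. rewrite <- (gmul1l (zpow (b 1) (e4 n))) at 1. rewrite !gmulA.
  rewrite (ctx2 _ _ _ _ (ba_swap 3 1 P13 (e6 n) e eq_refl oP13 cP13a1 cP13b3)), !gmulA.
  rewrite (ctx2 _ _ _ _ (ba_swap 2 1 P12 (e5 n) e eq_refl oP12 cP12a1 cP12b2)), !gmulA.
  rewrite (ctx2 _ _ _ _ (commute_zz _ _ (e4 n) e (cab 1 idx1))), !gmulA.
  rewrite (ctx2 _ _ _ _ (bswap P12 (b 3) T _ (e6 n) tP12b3 cT oT)), !gmulA.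
  rewrite (cshift _ _ _ (cb _ _ cT)). rewrite gmul1l. reflexivity.
Qed.

Lemma BA2 n e : beta n · zpow (a 2) e = zpow (a 2) e · beta n
  · bpow P12 (Z.odd (e4 n) && Z.odd e) · bpow P23 (Z.odd (e6 n) && Z.odd e)
  · bpow T ((Z.odd (e4 n) && Z.odd e) && Z.odd (e6 n)).
Proof.
  unfold beta. rewrite <- (gmul1l (zpow (b 1) (e4 n))) at 1. rewrite !gmulA.
  rewrite (ctx2 _ _ _ _ (ba_swap 3 2 P23 (e6 n) e eq_refl oP23 cP23a2 cP23b3)), !gmulA.
  rewrite (ctx2 _ _ _ _ (commute_zz _ _ (e5 n) e (cab 2 idx2))), !gmulA.
  rewrite (ctx2 _ _ _ _ (ba_swap 1 2 P12 (e4 n) e sP21 oP12 cP12a2 cP12b1)), !gmulA.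
  rewrite (ctx2 _ _ _ _ (bcomm P12 (b 2) _ (e5 n) cP12b2)), !gmulA.
  rewrite (ctx2 _ _ _ _ (bswap P12 (b 3) T _ (e6 n) tP12b3 cT oT)), !gmulA.
  rewrite (cshift _ _ _ (cb _ _ cT)). rewrite gmul1l. reflexivity.
Qed.

Lemma BA3 n e : beta n · zpow (a 3) e = zpow (a 3) e · beta n
  · bpow P13 (Z.odd (e4 n) && Z.odd e) · bpow P23 (Z.odd (e5 n) && Z.odd e)
  · bpow T ((Z.odd (e4 n) && Z.odd e) && Z.odd (e5 n)).
Proof.
  unfold beta. rewrite <- (gmul1l (zpow (b 1) (e4 n))) at 1. rewrite !gmulA.
  rewrite (ctx2 _ _ _ _ (commute_zz _ _ (e6 n) e (cab 3 idx3))), !gmulA.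
  rewrite (ctx2 _ _ _ _ (ba_swap 2 3 P23 (e5 n) e sP32 oP23 cP23a3 cP23b2)), !gmulA.
  rewrite (ctx2 _ _ _ _ (ba_swap 1 3 P13 (e4 n) e sP31 oP13 cP13a3 cP13b1)), !gmulA.
  rewrite (ctx2 _ _ _ _ (bswap P13 (b 2) T _ (e5 n) tP13b2 cT oT)), !gmulA.
  repeat rewrite (cshift _ _ _ (cb _ _ cT)).
  rewrite (ctx2 _ _ _ _ (bcomm P23 (b 3) _ (e6 n) cP23b3)), !gmulA.
  repeat rewrite (cshift _ _ _ (cb _ _ cT)).
  rewrite (ctx2 _ _ _ _ (bcomm P13 (b 3) _ (e6 n) cP13b3)), !gmulA.
  repeat rewrite (cshift _ _ _ (cb _ _ cT)).
  rewrite gmul1l. reflexivity.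
Qed.

Lemma eU12 x : bpow U12 x = E Ls [x; false; false; false; false; false; false; false; false; false; false].
Proof. unfold Ls. Esimp. reflexivity. Qed.
Lemma eU13 x : bpow U13 x = E Ls [false; x; false; false; false; false; false; false; false; false; false].
Proof. unfold Ls. Esimp. reflexivity. Qed.
Lemma eU23 x : bpow U23 x = E Ls [false; false; x; false; false; false; false; false; false; false; false].
Proof. unfold Ls. Esimp. reflexivity. Qed.
Lemma eV12 x : bpow V12 x = E Ls [false; false; false; x; false; false; false; false; false; false; false].
Proof. unfold Ls. Esimp. reflexivity. Qed.
Lemma eV13 x : bpow V13 x = E Ls [false; false; false; false; x; false; false; false; false; false; false].
Proof. unfold Ls. Esimp. reflexivity. Qed.
Lemma eV23 x : bpow V23 x = E Ls [false; false; false; false; false; x; false; false; false; false; false].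
Proof. unfold Ls. Esimp. reflexivity. Qed.
Lemma eP12 x : bpow P12 x = E Ls [false; false; false; false; false; false; x; false; false; false; false].
Proof. unfold Ls. Esimp. reflexivity. Qed.
Lemma eP13 x : bpow P13 x = E Ls [false; false; false; false; false; false; false; x; false; false; false].
Proof. unfold Ls. Esimp. reflexivity. Qed.
Lemma eP23 x : bpow P23 x = E Ls [false; false; false; false; false; false; false; false; x; false; false].
Proof. unfold Ls. Esimp. reflexivity. Qed.
Lemma eZ x : bpow Z x = E Ls [false; false; false; false; false; false; false; false; false; x; false].
Proof. unfold Ls. Esimp. reflexivity. Qed.
Lemma eT x : bpow T x = E Ls [false; false; false; false; false; false; false; false; false; false; x].
Proof. unfold Ls. Esimp. reflexivity. Qed.

Lemma Exor_ctx w fs gs : length fs = 11%nat -> length gs = 11%nat ->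
  w · E Ls fs · E Ls gs = w · E Ls (xorl fs gs).
Proof. intros. rewrite <- gmulA, E_xor; auto. apply good_Ls. Qed.

Definition Ra1 n e := let o := Z.odd e in
  mkNF (e1 n + e) (e2 n) (e3 n) (e4 n) (e5 n) (e6 n)
   (xorb (f7 n) (Z.odd (e2 n) && o)) (xorb (f8 n) (Z.odd (e3 n) && o)) (f9 n) (f10 n) (f11 n) (f12 n)
   (xorb (f13 n) (Z.odd (e5 n) && o)) (xorb (f14 n) (Z.odd (e6 n) && o)) (f15 n)
   (xorb (f16 n) (o && f15 n)) (xorb (f17 n) ((Z.odd (e5 n) && o) && Z.odd (e6 n))).

Ltac toE := rewrite ?eU12, ?eU13, ?eU23, ?eV12, ?eV13, ?eV23, ?eP12, ?eP13, ?eP23, ?eZ, ?eT.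
Ltac mergeE := repeat (rewrite Exor_ctx; [| reflexivity | reflexivity]).
Ltac listeq := repeat (apply (f_equal2 (@cons bool)); [btauto|]); reflexivity.
Ltac finish R := rewrite gmul1l; unfold alpha, beta, tf, R;
  cbn [e1 e2 e3 e4 e5 e6 f7 f8 f9 f10 f11 f12 f13 f14 f15 f16 f17];
  rewrite ?gmulA; f_equal; f_equal; cbn [xorl]; listeq.

Lemma RA1 n e : ev n · zpow (a 1) e = ev (Ra1 n e).
Proof.
  unfold ev.
  rewrite (ctx2 _ _ _ _ (W_a1 n e)), !gmulA.
  rewrite (ctx2 _ _ _ _ (BA1 n e)), !gmulA.
  rewrite <- (gmul1l (alpha n)) at 1.
  rewrite (ctx2 _ _ _ _ (A_a1 n e)), !gmulA.
  rewrite (cshift _ _ (beta n) (cb _ _ cU13)), (cshift _ _ (beta n) (cb _ _ cU12)).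
  toE. mergeE. finish Ra1.
Qed.


Definition Ra2 n e := let o := Z.odd e in
  mkNF (e1 n) (e2 n + e) (e3 n) (e4 n) (e5 n) (e6 n)
   (f7 n) (f8 n) (xorb (f9 n) (Z.odd (e3 n) && o)) (f10 n) (f11 n) (f12 n)
   (xorb (f13 n) (Z.odd (e4 n) && o)) (f14 n) (xorb (f15 n) (Z.odd (e6 n) && o))
   (xorb (f16 n) (o && f14 n)) (xorb (f17 n) ((Z.odd (e4 n) && o) && Z.odd (e6 n))).
Definition Ra3 n e := let o := Z.odd e in
  mkNF (e1 n) (e2 n) (e3 n + e) (e4 n) (e5 n) (e6 n)
   (f7 n) (f8 n) (f9 n) (f10 n) (f11 n) (f12 n)
   (f13 n) (xorb (f14 n) (Z.odd (e4 n) && o)) (xorb (f15 n) (Z.odd (e5 n) && o))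
   (xorb (f16 n) (o && f13 n)) (xorb (f17 n) ((Z.odd (e4 n) && o) && Z.odd (e5 n))).
Definition Rb1 n e := let o := Z.odd e in
  mkNF (e1 n) (e2 n) (e3 n) (e4 n + e) (e5 n) (e6 n)
   (f7 n) (f8 n) (f9 n) (xorb (f10 n) (Z.odd (e5 n) && o)) (xorb (f11 n) (Z.odd (e6 n) && o)) (f12 n)
   (f13 n) (f14 n) (f15 n) (f16 n) (xorb (f17 n) (o && f15 n)).
Definition Rb2 n e := let o := Z.odd e in
  mkNF (e1 n) (e2 n) (e3 n) (e4 n) (e5 n + e) (e6 n)
   (f7 n) (f8 n) (f9 n) (f10 n) (f11 n) (xorb (f12 n) (Z.odd (e6 n) && o))
   (f13 n) (f14 n) (f15 n) (f16 n) (xorb (f17 n) (o && f14 n)).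
Definition Rb3 n e := let o := Z.odd e in
  mkNF (e1 n) (e2 n) (e3 n) (e4 n) (e5 n) (e6 n + e)
   (f7 n) (f8 n) (f9 n) (f10 n) (f11 n) (f12 n)
   (f13 n) (f14 n) (f15 n) (f16 n) (xorb (f17 n) (o && f13 n)).

Lemma RA2 n e : ev n · zpow (a 2) e = ev (Ra2 n e).
Proof.
  unfold ev.
  rewrite (ctx2 _ _ _ _ (W_a2 n e)), !gmulA.
  rewrite (ctx2 _ _ _ _ (BA2 n e)), !gmulA.
  rewrite <- (gmul1l (alpha n)) at 1.
  rewrite (ctx2 _ _ _ _ (A_a2 n e)), !gmulA.
  rewrite (cshift _ _ (beta n) (cb _ _ cU23)).
  toE. mergeE. finish Ra2.
Qed.

Lemma RA3 n e : ev n · zpow (a 3) e = ev (Ra3 n e).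
Proof.
  unfold ev.
  rewrite (ctx2 _ _ _ _ (W_a3 n e)), !gmulA.
  rewrite (ctx2 _ _ _ _ (BA3 n e)), !gmulA.
  rewrite <- (gmul1l (alpha n)) at 1.
  rewrite (ctx2 _ _ _ _ (A_a3 n e)), !gmulA.
  toE. mergeE. finish Ra3.
Qed.

Lemma RB1 n e : ev n · zpow (b 1) e = ev (Rb1 n e).
Proof.
  unfold ev.
  rewrite (ctx2 _ _ _ _ (W_b1 n e)), !gmulA.
  rewrite <- (gmul1l (alpha n)) at 1.
  rewrite (ctx2 _ _ _ _ (B_b1 n e)), !gmulA.
  toE. mergeE. finish Rb1.
Qed.

Lemma RB2 n e : ev n · zpow (b 2) e = ev (Rb2 n e).
Proof.
  unfold ev.
  rewrite (ctx2 _ _ _ _ (W_b2 n e)), !gmulA.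
  rewrite <- (gmul1l (alpha n)) at 1.
  rewrite (ctx2 _ _ _ _ (B_b2 n e)), !gmulA.
  toE. mergeE. finish Rb2.
Qed.

Lemma RB3 n e : ev n · zpow (b 3) e = ev (Rb3 n e).
Proof.
  unfold ev.
  rewrite (ctx2 _ _ _ _ (W_b3 n e)), !gmulA.
  rewrite <- (gmul1l (alpha n)) at 1.
  rewrite (ctx2 _ _ _ _ (B_b3 n e)), !gmulA.
  toE. mergeE. finish Rb3.
Qed.


Definition settail (n : NF) (l : list bool) : NF :=
  match l with
  | [g7; g8; g9; g10; g11; g12; g13; g14; g15; g16; g17] =>
      mkNF (e1 n) (e2 n) (e3 n) (e4 n) (e5 n) (e6 n) g7 g8 g9 g10 g11 g12 g13 g14 g15 g16 g17
  | _ => n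
  end.
Definition Rt n gs := settail n (xorl (tf n) gs).

Lemma RT n gs : length gs = 11%nat -> ev n · E Ls gs = ev (Rt n gs).
Proof.
  intro Hl.
  do 11 (destruct gs as [|? gs]; [discriminate|]). destruct gs; [|discriminate].
  unfold ev. rewrite <- gmulA, E_xor; [ | apply good_Ls | reflexivity | reflexivity].
  reflexivity.
Qed.

Definition mult (n m : NF) : NF :=
  Rt (Rb3 (Rb2 (Rb1 (Ra3 (Ra2 (Ra1 n (e1 m)) (e2 m)) (e3 m)) (e4 m)) (e5 m)) (e6 m)) (tf m).

Lemma mult_ok n m : nfeval (basis a b) n · nfeval (basis a b) m = nfeval (basis a b) (mult n m).
Proof.
  rewrite !nf_ev. unfold ev at 2. unfold alpha, beta. rewrite !gmulA.
  rewrite RA1, RA2, RA3, RB1, RB2, RB3, RT by reflexivity. reflexivity.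
Qed.

End Rel.


Definition zeroNF := mkNF 0 0 0 0 0 0 false false false false false false false false false false false.
Definition nfa (k : nat) (z : Z) : NF :=
  match k with
  | 1 => mkNF z 0 0 0 0 0 false false false false false false false false false false false
  | 2 => mkNF 0 z 0 0 0 0 false false false false false false false false false false false
  | 3 => mkNF 0 0 z 0 0 0 false false false false false false false false false false false
  | 4 => mkNF 0 0 0 z 0 0 false false false false false false false false false false false
  | 5 => mkNF 0 0 0 0 z 0 false false false false false false false false false false false
  | 6 => mkNF 0 0 0 0 0 z false false false false false false false false false false false
  | _ => zeroNF
  end.

Section App.
Variable G : group.
Variables a b : nat -> G.
Local Infix "·" := (@gmul G) (at level 40, left associativity).

Lemma nf0 : nfeval (basis a b) zeroNF = gone.
Proof. unfold nfeval; simpl. rewrite !gmul1l. reflexivity. Qed.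

Ltac atomtac := unfold nfeval, nfa; simpl; rewrite ?gmul1l, ?mul1r; reflexivity.
Lemma pa1 : a 1 = nfeval (basis a b) (nfa 1 1). Proof. atomtac. Qed.
Lemma pa2 : a 2 = nfeval (basis a b) (nfa 2 1). Proof. atomtac. Qed.
Lemma pa3 : a 3 = nfeval (basis a b) (nfa 3 1). Proof. atomtac. Qed.
Lemma pb1 : b 1 = nfeval (basis a b) (nfa 4 1). Proof. atomtac. Qed.
Lemma pb2 : b 2 = nfeval (basis a b) (nfa 5 1). Proof. atomtac. Qed.
Lemma pb3 : b 3 = nfeval (basis a b) (nfa 6 1). Proof. atomtac. Qed.
Lemma ia1 : ginv (a 1) = nfeval (basis a b) (nfa 1 (-1)). Proof. atomtac. Qed.
Lemma ia2 : ginv (a 2) = nfeval (basis a b) (nfa 2 (-1)). Proof. atomtac. Qed.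
Lemma ia3 : ginv (a 3) = nfeval (basis a b) (nfa 3 (-1)). Proof. atomtac. Qed.
Lemma ib1 : ginv (b 1) = nfeval (basis a b) (nfa 4 (-1)). Proof. atomtac. Qed.
Lemma ib2 : ginv (b 2) = nfeval (basis a b) (nfa 5 (-1)). Proof. atomtac. Qed.
Lemma ib3 : ginv (b 3) = nfeval (basis a b) (nfa 6 (-1)). Proof. atomtac. Qed.

End App.

Ltac nfc a b Hr :=
  unfold zz, tt; unfold uu, vv, pp; unfold comm;
  rewrite ?npow2, ?inv_mul, ?inv_inv;
  rewrite ?(ia1 _ a b), ?(ia2 _ a b), ?(ia3 _ a b), ?(ib1 _ a b), ?(ib2 _ a b), ?(ib3 _ a b);
  rewrite ?(pa1 _ a b), ?(pa2 _ a b), ?(pa3 _ a b), ?(pb1 _ a b), ?(pb2 _ a b), ?(pb3 _ a b);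
  rewrite <- ?(nf0 _ a b);
  repeat rewrite (mult_ok _ _ _ Hr);
  match goal with |- nfeval ?B ?X = nfeval ?B ?Y => apply (f_equal (nfeval B)); vm_compute; reflexivity end.


Lemma idx_cases i : idx i -> i = 1 \/ i = 2 \/ i = 3.
Proof. unfold idx; lia. Qed.

Lemma hom_transfer (G : group) (a b a' b' : nat -> G) (Hr : G3_relations a b) (Hr' : G3_relations a' b')
  (Hnf : G3_unique_normal_form a b) (f : G -> G)
  (Hf : forall n, f (nfeval (basis a b) n) = nfeval (basis a' b') n) : is_hom f.
Proof.
  intros x y. destruct (Hnf x) as [n [Hn _]]. destruct (Hnf y) as [m [Hm _]]. subst x y.
  rewrite (mult_ok _ _ _ Hr), !Hf, (mult_ok _ _ _ Hr'). reflexivity.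
Qed.

Lemma nfeval_ext (G : group) (c c' : nat -> G) n :
  (forall k, 1 <= k <= 17 -> c k = c' k) -> nfeval c n = nfeval c' n.
Proof. intro Hc. unfold nfeval. rewrite (Hc 1 ltac:(lia)), (Hc 2 ltac:(lia)), (Hc 3 ltac:(lia)), (Hc 4 ltac:(lia)), (Hc 5 ltac:(lia)), (Hc 6 ltac:(lia)), (Hc 7 ltac:(lia)), (Hc 8 ltac:(lia)), (Hc 9 ltac:(lia)), (Hc 10 ltac:(lia)), (Hc 11 ltac:(lia)), (Hc 12 ltac:(lia)), (Hc 13 ltac:(lia)), (Hc 14 ltac:(lia)), (Hc 15 ltac:(lia)), (Hc 16 ltac:(lia)), (Hc 17 ltac:(lia)). reflexivity. Qed.

Definition bt (G : group) (a b : nat -> G) (i : nat) : G := gmul (ginv (a i)) (ginv (b i)).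

Section Tau.
Variable G : group.
Variables a b : nat -> G.
Hypothesis Hr : G3_relations a b.
Local Infix "·" := (@gmul G) (at level 40, left associativity).

Ltac nfcc := unfold bt; nfc a b Hr.

Lemma tst : vv G (bt G a b) 1 2 = uu G a 1 2 · vv G b 1 2.
Proof. nfcc. Qed.

Lemma rel_tau : G3_relations a (bt G a b).
Proof.
  split; [|split].
  - intros i Hi. destruct (R1 _ _ _ Hr i Hi) as (_&Ha&Hb).
    split; [|split]; auto.
    + destruct (idx_cases i Hi) as [ -> | [ -> | -> ] ]; nfcc.
    + replace (npow (bt G a b i) 2) with (ginv (npow (a i) 2) · ginv (npow (b i) 2)).
      apply central_mul; apply central_inv; auto.
      destruct (idx_cases i Hi) as [ -> | [ -> | -> ] ]; nfcc.
  - intros i j Hi Hj Hij.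
    destruct (idx_cases i Hi) as [ -> | [ -> | -> ] ]; destruct (idx_cases j Hj) as [ -> | [ -> | -> ] ]; try lia;
    (split; [nfcc|]); (split; [nfcc|]); (split; [nfcc|]); (split; [nfcc|]);
    (split; [|split; [|split; [nfcc|nfcc]]]).
    all: first
      [ exact (cU12 _ _ _ Hr) | exact (cU13 _ _ _ Hr) | exact (cU23 _ _ _ Hr)
      | match goal with |- central (vv _ _ ?i ?j) =>
          replace (vv G (bt G a b) i j) with (uu G a i j · vv G b i j) by (symmetry; nfcc);
          apply central_mul;
          first [ exact (cU12 _ _ _ Hr) | exact (cU13 _ _ _ Hr) | exact (cU23 _ _ _ Hr)
                | exact (cV12 _ _ _ Hr) | exact (cV13 _ _ _ Hr) | exact (cV23 _ _ _ Hr)] end ].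
  - intros i j k Hi Hj Hk Hij Hjk Hik.
    destruct (idx_cases i Hi) as [ -> | [ -> | -> ] ]; destruct (idx_cases j Hj) as [ -> | [ -> | -> ] ];
    destruct (idx_cases k Hk) as [ -> | [ -> | -> ] ]; try lia;
    (do 6 (split; [nfcc|])); (split;
    [ match goal with |- central ?x =>
        replace x with (zz G a b 1 2 3) by (symmetry; nfcc); exact (cZ _ _ _ Hr) end
    | match goal with |- central ?x =>
        replace x with (zz G a b 1 2 3 · tt G a b 1 2 3) by (symmetry; nfcc);
        apply central_mul; [exact (cZ _ _ _ Hr) | exact (cT _ _ _ Hr)] end ]).
Qed.

Lemma tau_basis k : 1 <= k <= 17 -> basis a (bt G a b) k = tau_img a b k.
Proof.
  intro Hk.
  do 18 (destruct k as [|k]; [first [lia | reflexivity | (cbn [basis tau_img]; nfcc)] |]). lia.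
Qed.

Lemma rel_sigma : G3_relations b a.
Proof.
  split; [|split].
  - intros i Hi. destruct (R1 _ _ _ Hr i Hi) as (_&Ha&Hb).
    split; [|split]; auto.
    destruct (idx_cases i Hi) as [ -> | [ -> | -> ] ]; nfcc.
  - intros i j Hi Hj Hij.
    destruct (idx_cases i Hi) as [ -> | [ -> | -> ] ]; destruct (idx_cases j Hj) as [ -> | [ -> | -> ] ]; try lia;
    (split; [nfcc|]); (split; [nfcc|]); (split; [nfcc|]); (split; [nfcc|]);
    (split; [|split; [|split; [nfcc|nfcc]]]).
    all: first
      [ exact (cU12 _ _ _ Hr) | exact (cU13 _ _ _ Hr) | exact (cU23 _ _ _ Hr)
      | exact (cV12 _ _ _ Hr) | exact (cV13 _ _ _ Hr) | exact (cV23 _ _ _ Hr)].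
  - intros i j k Hi Hj Hk Hij Hjk Hik.
    destruct (idx_cases i Hi) as [ -> | [ -> | -> ] ]; destruct (idx_cases j Hj) as [ -> | [ -> | -> ] ];
    destruct (idx_cases k Hk) as [ -> | [ -> | -> ] ]; try lia;
    (do 6 (split; [nfcc|])); (split;
    [ match goal with |- central ?x =>
        replace x with (tt G a b 1 2 3) by (symmetry; nfcc); exact (cT _ _ _ Hr) end
    | match goal with |- central ?x =>
        replace x with (zz G a b 1 2 3) by (symmetry; nfcc); exact (cZ _ _ _ Hr) end ]).
Qed.

Lemma sigma_basis k : 1 <= k <= 17 -> basis b a k = sigma_img a b k.
Proof.
  intro Hk.
  do 18 (destruct k as [|k]; [first [lia | reflexivity | (cbn [basis sigma_img]; nfcc)] |]). lia.
Qed.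

End Tau.


Section Hom.
Variable G : group.
Local Infix "·" := (@gmul G) (at level 40, left associativity).
Variable f : G -> G.
Hypothesis Hf : is_hom f.

Lemma hom_one : f gone = gone.
Proof.
  apply (cancel_l (f gone)). rewrite <- Hf, gmul1l, mul1r. reflexivity.
Qed.

Lemma hom_inv x : f (ginv x) = ginv (f x).
Proof. symmetry. apply inv_uniq. rewrite <- Hf, mulV. apply hom_one. Qed.

Lemma hom_npow x n : f (npow x n) = npow (f x) n.
Proof. induction n; simpl. apply hom_one. rewrite Hf, IHn. reflexivity. Qed.

Lemma hom_zpow x e : f (zpow x e) = zpow (f x) e.
Proof. destruct e; simpl. apply hom_one. apply hom_npow. rewrite hom_inv, hom_npow. reflexivity. Qed.

Lemma hom_bpow x c : f (bpow x c) = bpow (f x) c.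
Proof. destruct c; simpl. reflexivity. apply hom_one. Qed.

Lemma hom_comm x y : f (comm x y) = comm (f x) (f y).
Proof. unfold comm. rewrite !Hf, !hom_inv. reflexivity. Qed.

Lemma hom_nfeval c n : f (nfeval c n) = nfeval (fun k => f (c k)) n.
Proof. unfold nfeval. rewrite !Hf, !hom_zpow, !hom_bpow. reflexivity. Qed.

End Hom.

Lemma hom_compose (G : group) (f g : G -> G) : is_hom f -> is_hom g -> is_hom (fun x => f (g x)).
Proof. intros Hf Hg x y. rewrite Hg, Hf. reflexivity. Qed.

Section Main.
Variable G : group.
Variables a b : nat -> G.
Hypothesis Hr : G3_relations a b.
Hypothesis Hnf : G3_unique_normal_form a b.
Local Infix "·" := (@gmul G) (at level 40, left associativity).

Lemma nf_inj n1 n2 : nfeval (basis a b) n1 = nfeval (basis a b) n2 -> n1 = n2.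
Proof.
  intro E. destruct (Hnf (nfeval (basis a b) n1)) as [n [Hn Hu]].
  rewrite <- (Hu n1 eq_refl). apply Hu. symmetry; exact E.
Qed.

Lemma hom_fix f : is_hom f -> (forall i, idx i -> f (a i) = a i) -> (forall i, idx i -> f (b i) = b i) ->
  forall x, f x = x.
Proof.
  intros Hf Ha Hb x. destruct (Hnf x) as [n [<- _]].
  rewrite (hom_nfeval _ _ Hf). apply nfeval_ext. intros k Hk.
  pose proof (Ha 1 idx1) as A1. pose proof (Ha 2 idx2) as A2. pose proof (Ha 3 idx3) as A3.
  pose proof (Hb 1 idx1) as B1. pose proof (Hb 2 idx2) as B2. pose proof (Hb 3 idx3) as B3.
  do 18 (destruct k as [|k]; [first [lia | (cbn [basis]; unfold zz, tt, uu, vv, pp;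
     rewrite ?(hom_comm _ _ Hf), ?A1, ?A2, ?A3, ?B1, ?B2, ?B3; reflexivity)] |]). lia.
Qed.

Lemma cab' i : idx i -> commute (a i) (b i).
Proof. intro Hi. destruct (R1 _ _ _ Hr i Hi) as (Hc&_&_). apply comm_trivial, Hc. Qed.

Ltac hsimp H := unfold nfeval, nfa in H; simpl in H; rewrite ?gmul1l, ?mul1r in H.

Lemma neq_nf n1 n2 x y : x = nfeval (basis a b) n1 -> y = nfeval (basis a b) n2 -> n1 <> n2 -> x <> y.
Proof. intros -> -> Hn E. apply Hn, nf_inj, E. Qed.

Theorem main_thm (sigma tau : G -> G)
  (Hsigma : forall n : NF, sigma (nfeval (basis a b) n) = nfeval (sigma_img a b) n)
  (Htau : forall n : NF, tau (nfeval (basis a b) n) = nfeval (tau_img a b) n) :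
  is_automorphism tau /\ has_order tau 2 /\
  is_automorphism (fun g => sigma (tau g)) /\ has_order (fun g => sigma (tau g)) 3.
Proof.
  assert (Ht : is_hom tau).
  { apply (hom_transfer G a b a (bt G a b) Hr (rel_tau G a b Hr) Hnf tau).
    intro n. rewrite Htau. apply nfeval_ext. intros k Hk. symmetry. apply (tau_basis G a b Hr k Hk). }
  assert (Hs : is_hom sigma).
  { apply (hom_transfer G a b b a Hr (rel_sigma G a b Hr) Hnf sigma).
    intro n. rewrite Hsigma. apply nfeval_ext. intros k Hk. symmetry. apply (sigma_basis G a b Hr k Hk). }
  assert (TA : forall i, idx i -> tau (a i) = a i).
  { intros i Hi. destruct (idx_cases i Hi) as [ -> | [ -> | -> ] ].
    - pose proof (Htau (nfa 1 1)) as E. hsimp E. exact E.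
    - pose proof (Htau (nfa 2 1)) as E. hsimp E. exact E.
    - pose proof (Htau (nfa 3 1)) as E. hsimp E. exact E. }
  assert (TB : forall i, idx i -> tau (b i) = ginv (a i) · ginv (b i)).
  { intros i Hi. destruct (idx_cases i Hi) as [ -> | [ -> | -> ] ].
    - pose proof (Htau (nfa 4 1)) as E. hsimp E. exact E.
    - pose proof (Htau (nfa 5 1)) as E. hsimp E. exact E.
    - pose proof (Htau (nfa 6 1)) as E. hsimp E. exact E. }
  assert (SA : forall i, idx i -> sigma (a i) = b i).
  { intros i Hi. destruct (idx_cases i Hi) as [ -> | [ -> | -> ] ].
    - pose proof (Hsigma (nfa 1 1)) as E. hsimp E. exact E.
    - pose proof (Hsigma (nfa 2 1)) as E. hsimp E. exact E.
    - pose proof (Hsigma (nfa 3 1)) as E. hsimp E. exact E. }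
  assert (SB : forall i, idx i -> sigma (b i) = a i).
  { intros i Hi. destruct (idx_cases i Hi) as [ -> | [ -> | -> ] ].
    - pose proof (Hsigma (nfa 4 1)) as E. hsimp E. exact E.
    - pose proof (Hsigma (nfa 5 1)) as E. hsimp E. exact E.
    - pose proof (Hsigma (nfa 6 1)) as E. hsimp E. exact E. }
  set (rho := fun g => sigma (tau g)).
  assert (Hrho : is_hom rho) by (unfold rho; apply hom_compose; assumption).
  assert (RA : forall i, idx i -> rho (a i) = b i).
  { intros i Hi. unfold rho. rewrite TA, SA; auto. }
  assert (RB : forall i, idx i -> rho (b i) = ginv (b i) · ginv (a i)).
  { intros i Hi. unfold rho. rewrite TB, Hs, !(hom_inv _ _ Hs), SA, SB; auto. }
  assert (TT : forall x, tau (tau x) = x).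
  { apply hom_fix. apply hom_compose; auto.
    - intros i Hi. rewrite !TA; auto.
    - intros i Hi. rewrite TB, Ht, !(hom_inv _ _ Ht), TA, TB by auto.
      rewrite inv_mul, !inv_inv. rewrite <- (cab' i Hi). apply mulKl. }
  assert (R3 : forall x, rho (rho (rho x)) = x).
  { apply hom_fix. apply hom_compose; auto. apply hom_compose; auto.
    - intros i Hi. rewrite RA, RB, Hrho, !(hom_inv _ _ Hrho), RA, RB by auto.
      rewrite inv_mul, !inv_inv. apply mulKr'.
    - intros i Hi. rewrite RB, Hrho, !(hom_inv _ _ Hrho), RA, RB by auto.
      rewrite inv_mul, !inv_inv, mulKr'. apply RA; auto. }
  assert (Nb : ginv (a 1) · ginv (b 1) <> b 1).
  { apply (neq_nf (mult (nfa 1 (-1)) (nfa 4 (-1))) (nfa 4 1)).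
    - rewrite (ia1 _ a b), (ib1 _ a b), (mult_ok _ _ _ Hr). reflexivity.
    - apply pb1.
    - vm_compute. discriminate. }
  assert (Na : b 1 <> a 1).
  { apply (neq_nf (nfa 4 1) (nfa 1 1)). apply pb1. apply pa1. vm_compute. discriminate. }
  assert (Na2 : ginv (b 1) · ginv (a 1) <> a 1).
  { apply (neq_nf (mult (nfa 4 (-1)) (nfa 1 (-1))) (nfa 1 1)).
    - rewrite (ia1 _ a b), (ib1 _ a b), (mult_ok _ _ _ Hr). reflexivity.
    - apply pa1.
    - vm_compute. discriminate. }
  split; [|split; [|split]].
  - split; auto. exists tau. split; exact TT.
  - split; [lia|split].
    + intro x. simpl. apply TT.
    + intros m Hm. assert (m = 1) by lia. subst m. exists (b 1). simpl. rewrite TB by exact idx1. exact Nb.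
  - split; auto. exists (fun x => rho (rho x)). split; intro x; apply R3.
  - split; [lia|split].
    + intro x. simpl. apply R3.
    + intros m Hm. exists (a 1). destruct m as [|[|[|m]]]; try lia; simpl.
      * fold rho. rewrite RA by exact idx1. exact Na.
      * fold rho. rewrite RA, RB by exact idx1. exact Na2.
Qed.

End Main.


Theorem proposition2p13 (G : group) (a b : nat -> G)
  (Hrel : G3_relations a b) (Hnf : G3_unique_normal_form a b)
  (sigma tau : G -> G)
  (Hsigma : forall n : NF, sigma (nfeval (basis a b) n) = nfeval (sigma_img a b) n)
  (Htau : forall n : NF, tau (nfeval (basis a b) n) = nfeval (tau_img a b) n) :
  is_automorphism tau /\ has_order tau 2 /\
  is_automorphism (fun g => sigma (tau g)) /\ has_order (fun g => sigma (tau g)) 3.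
Proof.
  exact (main_thm G a b Hrel Hnf sigma tau Hsigma Htau).
Qed.
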